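(* Let $D>0$, $t\ge0$, and for $\gamma\ge9$ let $r_2(\gamma)=\frac{\gamma-1-\sqrt{(\gamma-1)(\gamma-9)}}{4}$. Then $$\min_{\gamma\ge 9}\big(\gamma D+r_2(\gamma)\,t\big)=5D+t+2\sqrt{2D(2D+t)},$$ the minimum being attained (for $t>0$) at $\gamma=5+2\frac{4D+t}{\sqrt{2D(2D+t)}}$, where the corresponding optimal strategy of Theorem 3 is $x_i=\tfrac12\Big(\big(1+\tfrac{2D}{\sqrt{2D(2D+t)}}\big)^i-1\Big)t$. Moreover $5D+t+2\sqrt{2D(2D+t)}\le 9D+2t$, with equality if and only if $t=0$.
   Context: In the turn-cost search model without a lower bound on $D$, a strategy achieving worst-case total cost $\gamma D+\phi$ exists with minimal $\phi=r_2(\gamma)t$ for each $\gamma\ge9$ (Theorem 3), attained by $x_i=\tfrac12(r_2(\gamma)^i-1)t$. *)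

(* Defs.v *)
From Stdlib Require Import Reals.
Open Scope R_scope.

Definition r2 (gamma : R) : R :=
  (gamma - 1 - sqrt ((gamma - 1) * (gamma - 9))) / 4.

Definition cost (D t gamma : R) : R := gamma * D + r2 gamma * t.

Definition strategy (gamma t : R) (i : nat) : R := / 2 * (r2 gamma ^ i - 1) * t.

(* Main.v *)
Require Import Defs.
From Stdlib Require Import Reals Lra Psatz.
Open Scope R_scope.

Theorem mainTheorem5 (D t : R) (hD : 0 < D) (ht : 0 <= t) :
  let v := 5 * D + t + 2 * sqrt (2 * D * (2 * D + t)) in
  (* v is the minimum of gamma D + r2(gamma) t over gamma >= 9 *)
  ((forall gamma, 9 <= gamma -> v <= cost D t gamma) /\
   (exists gamma, 9 <= gamma /\ cost D t gamma = v)) /\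
  (* for t > 0 it is attained at gamma*, with the stated optimal strategy *)
  (0 < t ->
   let gstar := 5 + 2 * ((4 * D + t) / sqrt (2 * D * (2 * D + t))) in
   9 <= gstar /\ cost D t gstar = v /\
   (forall i : nat, strategy gstar t i =
      / 2 * ((1 + 2 * D / sqrt (2 * D * (2 * D + t))) ^ i - 1) * t)) /\
  v <= 9 * D + 2 * t /\
  (v = 9 * D + 2 * t <-> t = 0).
Proof.
  intros v.
  assert (HS0 : 0 <= 2 * D * (2 * D + t)) by nra.
  assert (HS2 : sqrt (2 * D * (2 * D + t)) * sqrt (2 * D * (2 * D + t)) = 2 * D * (2 * D + t))
    by (apply sqrt_sqrt; exact HS0).
  assert (HSp : 0 < sqrt (2 * D * (2 * D + t))) by (apply sqrt_lt_R0; nra).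
  unfold v; clear v.
  set (S := sqrt (2 * D * (2 * D + t))) in *.
  assert (Hle : 2 * S <= 4 * D + t) by nra.
  assert (Hq : sqrt ((5 + 2 * ((4 * D + t) / S) - 1) * (5 + 2 * ((4 * D + t) / S) - 9))
               = 2 * t / S).
  { rewrite <- (sqrt_pow2 (2 * t / S)).
    - f_equal. field_simplify; try lra. f_equal. replace (S ^ 2) with (S * S) by ring.
      rewrite HS2. ring.
    - unfold Rdiv; apply Rmult_le_pos; [lra | left; apply Rinv_0_lt_compat; lra]. }
  assert (Hr : r2 (5 + 2 * ((4 * D + t) / S)) = 1 + 2 * D / S).
  { unfold r2. rewrite Hq. field. lra. }
  assert (Hg9 : 9 <= 5 + 2 * ((4 * D + t) / S)).
  { assert (4 <= 2 * ((4 * D + t) / S)); [| lra].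
    apply Rmult_le_reg_r with S; [lra|]. field_simplify; lra. }
  assert (Hc : cost D t (5 + 2 * ((4 * D + t) / S)) = 5 * D + t + 2 * S).
  { unfold cost. rewrite Hr. apply Rmult_eq_reg_r with S; [| lra].
    replace (((5 + 2 * ((4 * D + t) / S)) * D + (1 + 2 * D / S) * t) * S)
      with ((5 * D + t) * S + 8 * D * D + 4 * D * t) by (field; lra).
    nra. }
  split; [split|].
  - intros g Hg. unfold cost, r2.
    set (q := sqrt ((g - 1) * (g - 9))).
    assert (Hq2 : q * q = (g - 1) * (g - 9)) by (apply sqrt_sqrt; nra).
    assert (Hq0 : 0 <= q) by apply sqrt_pos.
    set (w := g - 5 - q).
    assert (Hqa : q < g - 5) by nra.
    assert (Hw : w * (g - 5 + q) = 16) by (unfold w; nra).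
    assert (Hw0 : 0 < w) by (unfold w; lra).
    assert (Hkey : 0 <= (w * (2 * D + t) - 4 * S) ^ 2) by apply pow2_ge_0.
    assert (H2 : 0 <= w * (2 * D + t) * ((g - 5) * D + w * t / 4 - 2 * S)).
    { replace (g - 5) with ((w + (g - 5 + q)) / 2) by (unfold w; field).
      nra. }
    assert (H3 : 0 <= (g - 5) * D + w * t / 4 - 2 * S).
    { apply Rmult_le_reg_l with (w * (2 * D + t)); [nra | lra]. }
    unfold w in H3. lra.
  - exists (5 + 2 * ((4 * D + t) / S)). split; [exact Hg9 | exact Hc].
  - split; [| split].
    + intros _. split; [exact Hg9|]. split; [exact Hc|].
      intros i. unfold strategy. rewrite Hr. reflexivity.
    + lra.
    + split; intros H.
      * assert (2 * S = 4 * D + t) by lra. nra.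
      * subst t. assert (S = 2 * D) by nra. lra.
Qed.
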